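(* For a non-negative integer $N$, let $\mathcal{Z}_N:=\sum_{c=0}^{N}\mathbb{Q}\cdot\zeta(-c,s+c)$ and $\mathcal{Z}:=\bigcup_{N\ge0}\mathcal{Z}_N$ (the $\mathbb{Q}$-vector spaces of meromorphic functions of $s$ spanned by these functions). Then $$\mathcal{Z}_N=\bigoplus_{\substack{c \text{ even}\\0\le c\le N}}\mathbb{Q}\cdot\zeta(-c,s+c),\qquad \mathcal{Z}=\bigoplus_{\substack{c\text{ even}\\ c\ge0}}\mathbb{Q}\cdot\zeta(-c,s+c),$$ and $\dim_{\mathbb{Q}}\mathcal{Z}_N=\lfloor N/2\rfloor+1$.
   Context: For an integer $c\ge 0$, $\zeta(-c,s+c)$ denotes the Euler–Zagier double zeta function $\zeta(s_1,s_2)=\sum_{1\le n_1<n_2} n_1^{-s_1}n_2^{-s_2}$ evaluated at $(s_1,s_2)=(-c,s+c)$; i.e. it is the meromorphic continuation to all $s\in\mathbb{C}$ of the series $\sum_{m,n\ge1} m^{c}(m+n)^{-s-c}$, which converges absolutely for $\Re(s)>2$. The direct sum notation means that the functions $\zeta(-c,s+c)$ with $c$ even in the indicated range are linearly independent over $\mathbb{Q}$ and span the space. *)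

(* Defs.v *)
From Stdlib Require Import Reals QArith Qreals List.
From Coquelicot Require Import Coquelicot.
Import ListNotations.
Open Scope R_scope.

(* n^(-w) for a natural number n >= 1 and complex w:
   exp(-w log n) = e^{-Re w log n} (cos(Im w log n) - i sin(Im w log n)). *)
Definition npow_neg (n : nat) (w : C) : C :=
  Cmult (RtoC (exp (- (Re w) * ln (INR n))))
        (cos (Im w * ln (INR n)), - sin (Im w * ln (INR n))).

Fixpoint csum (f : nat -> C) (N : nat) : C :=
  match N with
  | O => f O
  | S k => Cplus (csum f k) (f (S k))
  end.

Definition dz_term (c : nat) (s : C) (n : nat) : C :=
  Cmult (npow_neg n (Cplus s (RtoC (INR c))))
        (RtoC (fold_right Rplus 0 (map (fun m => INR m ^ c) (seq 1 (n - 1))))).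

(* zeta(-c, s+c) = sum_{1 <= m < n} m^c n^{-s-c}, summed (absolutely convergent
   for Re s > 2) with the outer index n; real and imaginary parts separately. *)
Definition dzeta (c : nat) (s : C) : C :=
  (Series (fun n => Re (dz_term c s n)), Series (fun n => Im (dz_term c s n))).

Definition Hdom (s : C) : Prop := 2 < Re s.

Definition zcomb (P : nat -> bool) (q : nat -> Q) (N : nat) (s : C) : C :=
  csum (fun c => if P c then Cmult (RtoC (Q2R (q c))) (dzeta c s) else RtoC 0) N.

Definition in_span (P : nat -> bool) (N : nat) (f : C -> C) : Prop :=
  exists q : nat -> Q, forall s, Hdom s -> f s = zcomb P q N s.

Definition all_c (c : nat) : bool := true.

Definition ZN (N : nat) (f : C -> C) : Prop := in_span all_c N f.
Definition Zall (f : C -> C) : Prop := exists N, ZN N f.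

Definition lin_indep (P : nat -> bool) (N : nat) : Prop :=
  forall q : nat -> Q, (forall s, Hdom s -> zcomb P q N s = RtoC 0) ->
    forall c, (c <= N)%nat -> P c = true -> (q c == 0)%Q.

Definition fam_comb (b : nat -> C -> C) (q : nat -> Q) (d : nat) (s : C) : C :=
  fold_right Cplus (RtoC 0) (map (fun i => Cmult (RtoC (Q2R (q i))) (b i s)) (seq 0 d)).

Definition has_Qdim (V : (C -> C) -> Prop) (d : nat) : Prop :=
  exists b : nat -> C -> C,
    (forall i, (i < d)%nat -> V (b i)) /\
    (forall q : nat -> Q, (forall s, Hdom s -> fam_comb b q d s = RtoC 0) ->
       forall i, (i < d)%nat -> (q i == 0)%Q) /\
    (forall f, V f -> exists q : nat -> Q, forall s, Hdom s -> f s = fam_comb b q d s).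

(* Main.v *)
Require Import Defs.
From Stdlib Require Import Reals QArith Qreals List ZArith Znumtheory Lia Lra.
From Coquelicot Require Import Coquelicot.
Open Scope R_scope.

Definition E (p : R) (n : nat) : R := exp (- p * ln (INR n)).

Lemma E_pos p n : 0 < E p n.
Proof. apply exp_pos. Qed.

Lemma ln_gap (n : nat) : (2 <= n)%nat -> / INR n <= ln (INR n) - ln (INR (n - 1)).
Proof.
  intros Hn.
  assert (H1 : 1 <= INR (n-1)) by (apply (le_INR 1); lia).
  assert (Hx : INR n = INR (n-1) + 1) by (rewrite <- S_INR; f_equal; lia).
  set (y := INR (n-1)) in *.
  (* ln(y+1) - ln y = - ln (y/(y+1)) = - ln (1 - 1/(y+1)) >= 1/(y+1) *)
  assert (Hq : 0 < 1 - / INR n).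
  { rewrite Hx. apply Rlt_Rminus. rewrite <- Rinv_1. apply Rinv_lt_contravar; lra. }
  assert (Hl : ln (1 - / INR n) <= - / INR n).
  { rewrite <- (ln_exp (- / INR n)). destruct (Req_dec (1 - / INR n) (exp (- / INR n))) as [E'|E'].
    - rewrite E'; lra.
    - left. apply ln_increasing; auto. pose proof (exp_ineq1_le (- / INR n)). lra. }
  assert (Heq : 1 - / INR n = y / INR n).
  { rewrite Hx. field. lra. }
  rewrite Heq in Hl. unfold Rdiv in Hl. rewrite ln_mult in Hl by (try apply Rinv_0_lt_compat; lra).
  rewrite ln_Rinv in Hl by lra. lra.
Qed.

Lemma E_tele (p : R) (n : nat) : 1 < p -> (2 <= n)%nat ->
  E p n <= / (p - 1) * (E (p - 1) (n - 1) - E (p - 1) n).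
Proof.
  intros Hp Hn. unfold E.
  assert (Hn0 : 0 < INR n) by (apply lt_0_INR; lia).
  pose proof (ln_gap n Hn) as G.
  set (L := ln (INR n)) in *. set (L1 := ln (INR (n-1))) in *.
  set (a := p - 1).
  assert (Ha : 0 < a) by (unfold a; lra).
  replace (exp (- a * L1)) with (exp (- a * L) * exp (a * (L - L1))) by (rewrite <- exp_plus; f_equal; ring).
  assert (Hinv : / INR n = exp (- L)) by (unfold L; rewrite exp_Ropp, exp_ln; auto).
  pose proof (exp_ineq1_le (a * (L - L1))) as X.
  assert (Y : exp (- p * L) = exp (- a * L) * exp (- L)) by (rewrite <- exp_plus; f_equal; unfold a; ring).
  rewrite Y. rewrite <- Hinv.
  assert (0 < exp (- a * L)) by apply exp_pos.
  apply Rmult_le_reg_l with a; auto.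
  replace (a * (/ a * (exp (- a * L) * exp (a * (L - L1)) - exp (- a * L)))) with (exp (- a * L) * exp (a * (L - L1)) - exp (- a * L)) by (field; lra).
  assert (a * / INR n <= exp (a * (L - L1)) - 1).
  { apply Rle_trans with (a * (L - L1)). apply Rmult_le_compat_l; lra. lra. }
  replace (exp (- a * L) * exp (a * (L - L1)) - exp (- a * L)) with (exp (- a * L) * (exp (a * (L - L1)) - 1)) by ring.
  replace (a * (exp (- a * L) * / INR n)) with (exp (- a * L) * (a * / INR n)) by ring.
  apply Rmult_le_compat_l; lra.
Qed.

Lemma E0 p : E p 0 = 1.
Proof. unfold E. replace (ln (INR 0)) with 0. rewrite Rmult_0_r; apply exp_0.
  unfold ln. destruct (Rlt_dec 0 (INR 0)) as [h|h]; [simpl in h; exfalso; exact (Rlt_irrefl 0 h)| reflexivity]. Qed.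
Lemma E1 p : E p 1 = 1.
Proof. unfold E. simpl. rewrite ln_1, Rmult_0_r. apply exp_0. Qed.

Lemma ex_series_pos_bound (a : nat -> R) (M : R) :
  (forall n, 0 <= a n) -> (forall N, sum_f_R0 a N <= M) -> ex_series a.
Proof.
  intros Hp HM.
  destruct (ex_finite_lim_seq_incr (sum_n a) M) as [l Hl].
  - intros n. rewrite sum_Sn. unfold plus; simpl. specialize (Hp (S n)). lra.
  - intros n. rewrite sum_n_Reals. auto.
  - exists l. exact Hl.
Qed.

Lemma pseries (p : R) : 1 < p -> ex_series (E p).
Proof.
  intros Hp. apply ex_series_pos_bound with (2 + / (p - 1)).
  - intros; left; apply E_pos.
  - assert (Hi : 0 < / (p - 1)) by (apply Rinv_0_lt_compat; lra).
    assert (K : forall N, (1 <= N)%nat -> sum_f_R0 (E p) N <= 2 + / (p - 1) * (1 - E (p - 1) N)).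
    { induction N as [|N IH]; intros HN; [lia|].
      destruct N as [|N].
      - simpl. rewrite E0, E1, E1. lra.
      - specialize (IH ltac:(lia)).
        pose proof (E_tele p (S (S N)) Hp ltac:(lia)) as T.
        replace (S (S N) - 1)%nat with (S N) in T by lia.
        change (sum_f_R0 (E p) (S N) + E p (S (S N)) <= 2 + / (p - 1) * (1 - E (p - 1) (S (S N)))).
        nra. }
    intros N. destruct N as [|N].
    + simpl. rewrite E0. lra.
    + specialize (K (S N) ltac:(lia)). pose proof (E_pos (p-1) (S N)). nra.
Qed.

Definition lsum (f : nat -> R) (a n : nat) : R := fold_right Rplus 0 (map f (seq a n)).

Lemma lsum_0 f a : lsum f a 0 = 0.
Proof. reflexivity. Qed.
Lemma lsum_Sl f a n : lsum f a (S n) = f a + lsum f (S a) n.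
Proof. reflexivity. Qed.
Lemma lsum_Sr f a n : lsum f a (S n) = lsum f a n + f (a + n)%nat.
Proof.
  unfold lsum. rewrite seq_S, map_app, fold_right_app. simpl.
  generalize (map f (seq a n)). intros l. induction l; simpl; [ring|]. rewrite IHl. ring.
Qed.
Lemma lsum_ext_in f g a n : (forall m, (a <= m < a + n)%nat -> f m = g m) -> lsum f a n = lsum g a n.
Proof.
  intros H. unfold lsum. f_equal. apply map_ext_in. intros m Hm. apply in_seq in Hm. auto.
Qed.
Lemma lsum_ext f g a n : (forall m, f m = g m) -> lsum f a n = lsum g a n.
Proof. intros; apply lsum_ext_in; auto. Qed.
Lemma lsum_plus f g a n : lsum (fun m => f m + g m) a n = lsum f a n + lsum g a n.
Proof. revert a; induction n; intros a; [simpl; unfold lsum; simpl; ring|]. rewrite !lsum_Sl, IHn. ring. Qed.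
Lemma lsum_scal c f a n : lsum (fun m => c * f m) a n = c * lsum f a n.
Proof. revert a; induction n; intros a; [unfold lsum; simpl; ring|]. rewrite !lsum_Sl, IHn. ring. Qed.
Lemma lsum_zero a n : lsum (fun _ => 0) a n = 0.
Proof. revert a; induction n; intros a; [reflexivity|]. rewrite lsum_Sl, IHn. ring. Qed.
Lemma lsum_shift h a n : lsum h (S a) n = lsum (fun m => h (S m)) a n.
Proof. unfold lsum. rewrite <- seq_shift, map_map. reflexivity. Qed.
Lemma lsum_rev f a n : lsum f a n = lsum (fun m => f (2 * a + n - 1 - m)%nat) a n.
Proof.
  revert f a; induction n; intros f a; [reflexivity|].
  rewrite lsum_Sl, IHn, lsum_Sr, lsum_shift.
  replace (2 * a + S n - 1 - (a + n))%nat with a by lia.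
  rewrite Rplus_comm. f_equal. apply lsum_ext. intros m. f_equal. lia.
Qed.
Lemma lsum_swap (F : nat -> nat -> R) a n K :
  lsum (fun m => lsum (fun j => F j m) 0 K) a n = lsum (fun j => lsum (fun m => F j m) a n) 0 K.
Proof.
  induction K.
  - rewrite lsum_0. rewrite (lsum_ext _ (fun _ => 0)) by (intros; reflexivity). apply lsum_zero.
  - rewrite lsum_Sr. rewrite <- IHK. rewrite <- lsum_plus. apply lsum_ext. intros m. rewrite lsum_Sr. reflexivity.
Qed.
Lemma lsum_bound f a n B : (forall m, (a <= m < a + n)%nat -> 0 <= f m <= B) -> 0 <= lsum f a n <= INR n * B.
Proof.
  revert a; induction n; intros a H; [unfold lsum; simpl; lra|].
  rewrite lsum_Sl, S_INR. destruct (IHn (S a)) as [h1 h2]; [intros; apply H; lia|].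
  destruct (H a ltac:(lia)). nra.
Qed.

Definition Ssum (c n : nat) : R := fold_right Rplus 0 (map (fun m => INR m ^ c) (seq 1 (n - 1))).
Definition A (c n : nat) : R := Ssum c n / INR n ^ c.

Lemma A_lsum c n : (1 <= n)%nat -> A c n = lsum (fun m => (INR m / INR n) ^ c) 1 (n - 1).
Proof.
  intros Hn. unfold A, Ssum. fold (lsum (fun m => INR m ^ c) 1 (n - 1)).
  unfold Rdiv. rewrite Rmult_comm, <- lsum_scal. apply lsum_ext. intros m.
  rewrite Rpow_mult_distr, pow_inv. ring.
Qed.

Lemma A_0 c : A c 0 = 0.
Proof. unfold A, Ssum. simpl. unfold Rdiv. ring. Qed.

Lemma A_bound c n : 0 <= A c n <= INR n.
Proof.
  destruct n as [|n]. { rewrite A_0. simpl. lra. }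
  rewrite A_lsum by lia.
  assert (H := lsum_bound (fun m => (INR m / INR (S n)) ^ c) 1 (S n - 1) 1).
  destruct H as [h1 h2].
  - intros m Hm. assert (0 < INR (S n)) by (apply lt_0_INR; lia).
    assert (0 <= INR m) by apply pos_INR.
    assert (INR m <= INR (S n)) by (apply le_INR; lia).
    assert (0 <= INR m / INR (S n) <= 1).
    { split. unfold Rdiv; apply Rmult_le_pos; [lra| left; apply Rinv_0_lt_compat; lra]. unfold Rdiv; apply Rmult_le_reg_r with (INR (S n)); auto; rewrite Rmult_assoc, Rinv_l by lra; lra. }
    split. apply pow_le; lra. rewrite <- (pow1 c). apply pow_incr; lra.
  - split; auto. rewrite minus_INR in h2 by lia. change (INR 1) with 1 in h2. lra.
Qed.

(* the polynomials p_c(u) = x^c + (1-x)^c with u = x(1-x) *)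
Fixpoint pp (c : nat) (u : R) : R :=
  match c with
  | O => 2
  | S O => 1
  | S ((S k) as k1) => pp k1 u - u * pp k u
  end.

Lemma pp_eval c x : pp c (x * (1 - x)) = x ^ c + (1 - x) ^ c.
Proof.
  assert (H : forall c, pp c (x * (1 - x)) = x ^ c + (1 - x) ^ c /\ pp (S c) (x * (1 - x)) = x ^ (S c) + (1 - x) ^ (S c)).
  { induction c0.
    - simpl. split; ring.
    - destruct IHc0 as [h1 h2]. split; auto.
      change (pp (S (S c0)) (x * (1 - x))) with (pp (S c0) (x * (1 - x)) - x * (1 - x) * pp c0 (x * (1 - x))).
      rewrite h1, h2. simpl. ring. }
  apply H.
Qed.

Lemma A_pp c n : 2 * A c n = lsum (fun m => pp c ((INR m / INR n) * (1 - INR m / INR n))) 1 (n - 1).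
Proof.
  destruct n as [|n]. { rewrite A_0. unfold lsum. simpl. ring. }
  rewrite A_lsum by lia.
  rewrite (lsum_ext (fun m => pp c ((INR m / INR (S n)) * (1 - INR m / INR (S n)))) (fun m => (INR m / INR (S n)) ^ c + (1 - INR m / INR (S n)) ^ c)) by (intros; apply pp_eval).
  rewrite lsum_plus.
  replace (lsum (fun m => (1 - INR m / INR (S n)) ^ c) 1 (S n - 1)) with (lsum (fun m => (INR m / INR (S n)) ^ c) 1 (S n - 1)). ring.
  rewrite lsum_rev. apply lsum_ext_in. intros m Hm.
  replace (2 * 1 + (S n - 1) - 1 - m)%nat with (S n - m)%nat by lia.
  rewrite minus_INR by lia. f_equal. field. apply not_0_INR; lia.
Qed.

Lemma Q2R_m1 : Q2R (-1) = -1.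
Proof. unfold Q2R; simpl. field. Qed.

Definition PolyL (d : nat) (f : R -> R) : Prop :=
  exists r : nat -> Q, forall u, f u = lsum (fun i => Q2R (r i) * u ^ i) 0 d.

Lemma PolyL_zero d : PolyL d (fun _ => 0).
Proof.
  exists (fun _ => 0%Q). intros u. rewrite (lsum_ext _ (fun _ => 0)). now rewrite lsum_zero.
  intros; rewrite RMicromega.Q2R_0; ring.
Qed.
Lemma PolyL_plus d f g : PolyL d f -> PolyL d g -> PolyL d (fun u => f u + g u).
Proof.
  intros [r1 H1] [r2 H2]. exists (fun i => r1 i + r2 i)%Q. intros u. rewrite H1, H2, <- lsum_plus.
  apply lsum_ext. intros; rewrite Q2R_plus; ring.
Qed.
Lemma PolyL_scal d k f : PolyL d f -> PolyL d (fun u => Q2R k * f u).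
Proof.
  intros [r H]. exists (fun i => k * r i)%Q. intros u. rewrite H, <- lsum_scal.
  apply lsum_ext. intros; rewrite Q2R_mult; ring.
Qed.
Lemma PolyL_minus d f g : PolyL d f -> PolyL d g -> PolyL d (fun u => f u - g u).
Proof.
  intros Hf Hg. destruct (PolyL_plus d f (fun u => Q2R (-1) * g u) Hf (PolyL_scal d (-1) g Hg)) as [r H].
  exists r. intros u. rewrite <- H. rewrite Q2R_m1. ring.
Qed.
Lemma PolyL_mono d f : PolyL d f -> PolyL (S d) f.
Proof.
  intros [r H]. exists (fun i => if (i <? d)%nat then r i else 0%Q). intros u.
  rewrite lsum_Sr, H. simpl (0 + d)%nat. replace (d <? d)%nat with false by (symmetry; apply Nat.ltb_irrefl).
  rewrite RMicromega.Q2R_0, Rmult_0_l, Rplus_0_r. apply lsum_ext_in. intros m Hm.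
  replace (m <? d)%nat with true by (symmetry; apply Nat.ltb_lt; lia). reflexivity.
Qed.
Lemma PolyL_mulu d f : PolyL d f -> PolyL (S d) (fun u => u * f u).
Proof.
  intros [r H]. exists (fun i => match i with O => 0%Q | S i' => r i' end). intros u.
  rewrite lsum_Sl, lsum_shift, H, RMicromega.Q2R_0, <- lsum_scal.
  rewrite Rmult_0_l, Rplus_0_l. apply lsum_ext. intros m. simpl. ring.
Qed.
Lemma PolyL_mon m : PolyL (S m) (fun u => u ^ m).
Proof.
  exists (fun i => if (i =? m)%nat then 1%Q else 0%Q). intros u.
  rewrite lsum_Sr, Nat.eqb_refl, RMicromega.Q2R_1.
  rewrite (lsum_ext_in _ (fun _ => 0)). rewrite lsum_zero. simpl. ring.
  intros i Hi. replace (i =? m)%nat with false by (symmetry; apply Nat.eqb_neq; lia).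
  rewrite RMicromega.Q2R_0. ring.
Qed.

Lemma pp_SS k u : pp (S (S k)) u = pp (S k) u - u * pp k u.
Proof. reflexivity. Qed.

Lemma pp_struct m :
  (exists g, PolyL m g /\ forall u, pp (2 * m) u = 2 * (-1) ^ m * u ^ m + g u) /\
  PolyL (S m) (pp (S (2 * m))).
Proof.
  induction m as [|m [[g [Hg Hpg]] Hodd]].
  - split.
    + exists (fun _ => 0). split. apply PolyL_zero. intros u. simpl. ring.
    + destruct (PolyL_mon 0) as [r H]. exists r. intros u. rewrite <- H. reflexivity.
  - assert (E1 : forall u, pp (2 * S m) u = 2 * (-1) ^ (S m) * u ^ (S m) + (pp (S (2 * m)) u - u * g u)).
    { intros u. replace (2 * S m)%nat with (S (S (2 * m))) by lia. rewrite pp_SS, Hpg. simpl. ring. }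
    split.
    + exists (fun u => pp (S (2 * m)) u - u * g u). split; auto.
      apply PolyL_minus; auto. apply PolyL_mulu; auto.
    + replace (S (2 * S m)) with (S (S (S (2 * m)))) by lia.
      assert (H : PolyL (S (S m)) (fun u => pp (S (S (2 * m))) u - u * pp (S (2 * m)) u)).
      { apply PolyL_minus.
        - assert (H2 : PolyL (S (S m)) (fun u => Q2R 2 * ((-1) ^ (S m) * u ^ (S m)) + (pp (S (2 * m)) u - u * g u))).
          { apply PolyL_plus. apply PolyL_scal.
            destruct (PolyL_scal _ (if Nat.even (S m) then 1 else -1)%Q _ (PolyL_mon (S m))) as [r Hr].
            exists r. intros u. rewrite <- Hr. f_equal.
            destruct (Nat.even (S m)) eqn:Ev.
            - apply Nat.even_spec in Ev. destruct Ev as [k Hk]. rewrite Hk, pow_1_even, RMicromega.Q2R_1. reflexivity.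
            - assert (Nat.odd (S m) = true) by (unfold Nat.odd; rewrite Ev; reflexivity).
              apply Nat.odd_spec in H. destruct H as [k Hk]. rewrite Hk.
              replace (2 * k + 1)%nat with (S (2 * k)) by lia. rewrite pow_1_odd, Q2R_m1. reflexivity.
            - apply PolyL_mono. apply PolyL_minus; auto. apply PolyL_mulu; auto. }
          destruct H2 as [r Hr]. exists r. intros u. rewrite <- Hr.
          replace (S (S (2 * m))) with (2 * S m)%nat by lia. rewrite E1.
          replace (Q2R 2) with 2 by (unfold Q2R; simpl; field). ring.
        - apply PolyL_mulu. auto. }
      destruct H as [r Hr]. exists r. intros u. rewrite <- Hr. apply pp_SS.
Qed.

Definition Span (K : nat) (f : R -> R) : Prop :=
  exists h : nat -> Q, forall u, f u = lsum (fun j => Q2R (h j) * pp (2 * j) u) 0 K.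

Lemma PolyL_Span K : forall f, PolyL K f -> Span K f.
Proof.
  induction K as [|K IH]; intros f [r Hr].
  - exists (fun _ => 0%Q). intros u. rewrite Hr. reflexivity.
  - destruct (pp_struct K) as [[g [Hg Hpg]] _].
    set (sg := if Nat.even K then 1%Q else (-1)%Q).
    assert (Hsg : Q2R sg = (-1) ^ K).
    { unfold sg. destruct (Nat.even K) eqn:Ev.
      - apply Nat.even_spec in Ev. destruct Ev as [k Hk]. rewrite Hk, pow_1_even, RMicromega.Q2R_1. reflexivity.
      - assert (Nat.odd K = true) by (unfold Nat.odd; rewrite Ev; reflexivity).
        apply Nat.odd_spec in H. destruct H as [k Hk]. rewrite Hk.
        replace (2 * k + 1)%nat with (S (2 * k)) by lia. rewrite pow_1_odd, Q2R_m1. reflexivity. }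
    set (cq := (r K * sg * (1 # 2))%Q).
    assert (Hc : Q2R cq * (2 * (-1) ^ K) = Q2R (r K)).
    { unfold cq. rewrite !Q2R_mult, Hsg. replace (Q2R (1 # 2)) with (/ 2) by (unfold Q2R; simpl; field).
      transitivity (Q2R (r K) * ((-1) ^ K * (-1) ^ K)). field.
      replace ((-1) ^ K * (-1) ^ K) with 1. ring.
      rewrite <- pow_add. replace (K + K)%nat with (2 * K)%nat by lia. rewrite pow_1_even. reflexivity. }
    assert (Hf' : PolyL K (fun u => lsum (fun i => Q2R (r i) * u ^ i) 0 K - Q2R cq * g u)).
    { apply PolyL_minus. exists r; auto. apply PolyL_scal; auto. }
    destruct (IH _ Hf') as [h Hh].
    exists (fun j => if (j =? K)%nat then cq else h j). intros u.
    rewrite lsum_Sr. rewrite Nat.eqb_refl. simpl (0 + K)%nat.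
    rewrite (lsum_ext_in _ (fun j => Q2R (h j) * pp (2 * j) u)).
    2: { intros m Hm. replace (m =? K)%nat with false by (symmetry; apply Nat.eqb_neq; lia). reflexivity. }
    rewrite <- Hh, Hr, lsum_Sr, Hpg. simpl (0 + K)%nat. rewrite <- Hc. ring.
Qed.

Lemma F1 K : exists h : nat -> Q, forall n,
  A (S (2 * K)) n = lsum (fun j => Q2R (h j) * A (2 * j) n) 0 (S K).
Proof.
  destruct (pp_struct K) as [_ Hodd].
  destruct (PolyL_Span _ _ Hodd) as [h Hh].
  exists h. intros n.
  apply Rmult_eq_reg_l with 2; [|lra].
  rewrite A_pp, <- lsum_scal.
  rewrite (lsum_ext (fun j => 2 * (Q2R (h j) * A (2 * j) n)) (fun j => Q2R (h j) * lsum (fun m => pp (2 * j) (INR m / INR n * (1 - INR m / INR n))) 1 (n - 1))).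
  2: { intros j. rewrite <- A_pp. ring. }
  rewrite (lsum_ext (fun m => pp (S (2 * K)) _) (fun m => lsum (fun j => Q2R (h j) * pp (2 * j) (INR m / INR n * (1 - INR m / INR n))) 0 (S K))).
  2: { intros m. apply Hh. }
  rewrite lsum_swap. apply lsum_ext. intros j. rewrite lsum_scal. reflexivity.
Qed.

Lemma even_2K K : Nat.even (2 * K) = true.
Proof. induction K; auto. replace (2 * S K)%nat with (S (S (2 * K))) by lia. exact IHK. Qed.
Lemma even_2K1 K : Nat.even (S (2 * K)) = false.
Proof. induction K; auto. replace (S (2 * S K))%nat with (S (S (S (2 * K)))) by lia. exact IHK. Qed.

Lemma evsum (F : nat -> R) N :
  sum_f_R0 (fun c => if Nat.even c then F c else 0) N = lsum (fun j => F (2 * j)%nat) 0 (S (Nat.div2 N)).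
Proof.
  assert (H : forall K, sum_f_R0 (fun c => if Nat.even c then F c else 0) (2 * K) = lsum (fun j => F (2 * j)%nat) 0 (S K) /\
                     sum_f_R0 (fun c => if Nat.even c then F c else 0) (S (2 * K)) = lsum (fun j => F (2 * j)%nat) 0 (S K)).
  { induction K as [|K [h1 h2]].
    - simpl. unfold lsum. simpl. split; ring.
    - assert (e1 : sum_f_R0 (fun c => if Nat.even c then F c else 0) (2 * S K) = lsum (fun j => F (2 * j)%nat) 0 (S (S K))).
      { replace (2 * S K)%nat with (S (S (2 * K))) by lia. simpl sum_f_R0 at 1.
        change (sum_f_R0 (fun c => if Nat.even c then F c else 0) (S (2 * K)) + (if Nat.even (S (S (2 * K))) then F (S (S (2 * K))) else 0) = lsum (fun j => F (2 * j)%nat) 0 (S (S K))).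
        rewrite h2. change (Nat.even (S (S (2 * K)))) with (Nat.even (2 * K)). rewrite even_2K.
        rewrite (lsum_Sr _ 0 (S K)). f_equal. f_equal. lia. }
      split; auto. change (sum_f_R0 (fun c => if Nat.even c then F c else 0) (2 * S K) + (if Nat.even (S (2 * S K)) then F (S (2 * S K)) else 0) = lsum (fun j => F (2 * j)%nat) 0 (S (S K))).
      rewrite e1, even_2K1. ring. }
  rewrite (Nat.div2_odd N) at 1. destruct (Nat.odd N); simpl Nat.b2n.
  - rewrite Nat.add_1_r. apply H.
  - rewrite Nat.add_0_r. apply H.
Qed.

Module TwoAdic.
Local Open Scope Z_scope.

Fixpoint zp (x : Z) (n : nat) : Z := match n with O => 1 | S n' => x * zp x n' end.
Definition zl (f : nat -> Z) (l : list nat) : Z := fold_right Z.add 0 (map f l).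

Lemma zp_add x a b : zp x (a + b) = zp x a * zp x b.
Proof. induction a; cbn [zp Nat.add]; [ring|]. rewrite IHa. ring. Qed.
Lemma zp_mul x a b : zp x (a * b) = zp (zp x a) b.
Proof. induction b; cbn [zp]. rewrite Nat.mul_0_r. reflexivity. rewrite Nat.mul_succ_r, zp_add, IHb. ring. Qed.
Lemma zp_1 n : zp 1 n = 1.
Proof. induction n; cbn [zp]; auto. rewrite IHn; ring. Qed.
Lemma zp_pos x n : 0 < x -> 0 < zp x n.
Proof. intros; induction n; cbn [zp]; lia. Qed.
Lemma zp_nat2 n : Z.of_nat (2 ^ n) = zp 2 n.
Proof. induction n; cbn [zp]; auto. rewrite Nat.pow_succ_r', Nat2Z.inj_mul, IHn. lia. Qed.
Lemma IZR_zp x n : IZR (zp x n) = (IZR x ^ n)%R.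
Proof. induction n; cbn [zp pow]; auto. rewrite mult_IZR, IHn. reflexivity. Qed.
Lemma zp_gt n : Z.of_nat n < zp 2 n.
Proof. induction n; cbn [zp]; lia. Qed.

Lemma zl_app f l1 l2 : zl f (l1 ++ l2) = zl f l1 + zl f l2.
Proof. induction l1; simpl; auto. unfold zl in *. simpl. rewrite IHl1. ring. Qed.
Lemma zl_plus f g l : zl (fun m => f m + g m) l = zl f l + zl g l.
Proof. induction l; simpl; auto. unfold zl in *; simpl. rewrite IHl. ring. Qed.
Lemma zl_ext f g l : (forall m, f m = g m) -> zl f l = zl g l.
Proof. intros H; unfold zl; f_equal; apply map_ext; auto. Qed.
Lemma zl_ext_in f g l : (forall m, In m l -> f m = g m) -> zl f l = zl g l.
Proof. intros H; unfold zl; f_equal; apply map_ext_in; auto. Qed.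
Lemma zl_div d f l : (forall m, In m l -> (d | f m)) -> (d | zl f l).
Proof.
  induction l; intros H; simpl. apply Z.divide_0_r.
  unfold zl; simpl. apply Z.divide_add_r. apply H; simpl; auto. apply IHl. intros; apply H; simpl; auto.
Qed.
Lemma zl_map f g l : zl f (map g l) = zl (fun m => f (g m)) l.
Proof. unfold zl. rewrite map_map. reflexivity. Qed.
Lemma IZR_zl f l : IZR (zl f l) = fold_right Rplus 0%R (map (fun m => IZR (f m)) l).
Proof. induction l; simpl; auto. unfold zl in *; simpl. rewrite plus_IZR, IHl. reflexivity. Qed.

Lemma seq_shift_gen a b n : map (Nat.add a) (seq b n) = seq (a + b) n.
Proof. revert b; induction n; intros b; simpl; auto. rewrite IHn. f_equal. f_equal. lia. Qed.

Lemma pow_diff X Y n : (X - Y | zp X n - zp Y n).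
Proof.
  induction n; cbn [zp]. exists 0; ring.
  destruct IHn as [w Hw]. exists (X * w + zp Y n).
  replace (X * zp X n - Y * zp Y n) with (X * (zp X n - zp Y n) + zp Y n * (X - Y)) by ring.
  rewrite Hw. ring.
Qed.

Lemma sq_diff (m b : Z) j : (2 * (2 * b) | zp (m + 2 * b) (2 * j) - zp m (2 * j)).
Proof.
  rewrite !zp_mul. eapply Z.divide_trans; [|apply pow_diff].
  exists (m + b). cbn [zp]. ring.
Qed.

Definition sig (j k : nat) : Z := zl (fun m => zp (Z.of_nat m) (2 * j)) (seq 1 (2 ^ k - 1)).

Lemma val j k : (1 <= j)%nat -> (1 <= k)%nat -> exists t, Z.Odd t /\ sig j k = zp 2 (k - 1) * t.
Proof.
  intros Hj Hk. destruct k as [|k]; [lia|]. clear Hk.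
  induction k as [|k [t [Ht Hs]]].
  - exists 1. split. exists 0; ring. unfold sig. simpl. unfold zl. simpl. rewrite zp_1. ring.
  - set (F := fun m : nat => zp (Z.of_nat m) (2 * j)).
    set (a := (2 ^ S k)%nat).
    assert (Ha : (1 <= a)%nat) by (unfold a; pose proof (Nat.pow_nonzero 2 (S k) ltac:(lia)); lia).
    assert (Hseq : seq 1 (2 ^ S (S k) - 1) = seq 1 (a - 1) ++ a :: map (Nat.add a) (seq 1 (a - 1))).
    { replace (2 ^ S (S k) - 1)%nat with ((a - 1) + S (a - 1))%nat by (rewrite (Nat.pow_succ_r' 2 (S k)); fold a; lia).
      rewrite seq_app. f_equal. replace (1 + (a - 1))%nat with a by lia. simpl. f_equal.
      rewrite seq_shift_gen. f_equal. lia. }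
    assert (Hs' : zl F (seq 1 (a - 1)) = zp 2 k * t).
    { unfold sig in Hs. replace (S k - 1)%nat with k in Hs by lia. exact Hs. }
    unfold sig. rewrite Hseq. fold F. rewrite zl_app.
    change (zl F (a :: map (Nat.add a) (seq 1 (a - 1)))) with (F a + zl F (map (Nat.add a) (seq 1 (a - 1)))).
    rewrite zl_map.
    rewrite (zl_ext (fun m => F (a + m)%nat) (fun m => F m + (F (a + m)%nat - F m))) by (intros; ring).
    rewrite zl_plus, Hs'.
    assert (HA : Z.of_nat a = 2 * zp 2 k) by (unfold a; rewrite zp_nat2; reflexivity).
    assert (D1 : (2 * Z.of_nat a | zl (fun m => F (a + m)%nat - F m) (seq 1 (a - 1)))).
    { apply zl_div. intros m _. unfold F. rewrite Nat2Z.inj_add, HA, (Z.add_comm (2 * zp 2 k)).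
      apply sq_diff. }
    assert (D2 : (2 * Z.of_nat a | F a)).
    { unfold F. destruct j as [|j']; [lia|]. replace (2 * S j')%nat with (S (S (2 * j'))) by lia. cbn [zp].
      rewrite HA. exists (zp 2 k * zp (2 * zp 2 k) (2 * j')). ring. }
    destruct D1 as [w1 H1]. destruct D2 as [w2 H2].
    exists (t + 2 * (w1 + w2)). split.
    + destruct Ht as [p Hp]. exists (p + (w1 + w2)). lia.
    + replace (S (S k) - 1)%nat with (S k) by lia. cbn [zp].
      rewrite H1, H2, HA. ring.
Qed.

Lemma relp_odd t n : Z.Odd t -> rel_prime t (zp 2 n).
Proof.
  intros Ht. induction n; cbn [zp].
  - apply rel_prime_sym, rel_prime_1.
  - apply rel_prime_mult; auto. apply rel_prime_sym. apply prime_rel_prime. apply prime_2.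
    intros [c Hc]. destruct Ht as [p Hp]. lia.
Qed.

Lemma topzero K (z : nat -> Z) : (1 <= K)%nat ->
  (forall k, (1 <= k)%nat -> zl (fun j => z j * sig j k * zp (zp 2 k) (2 * (K - j))) (seq 0 (S K)) = 0) ->
  z K = 0.
Proof.
  intros HK H.
  assert (Hd : forall k, (1 <= k)%nat -> (zp 2 (S k) | z K)).
  { intros k Hk. specialize (H k Hk). rewrite seq_S, zl_app in H.
    change (zl _ (0 + K :: nil)%nat) with (z (0 + K)%nat * sig (0 + K) k * zp (zp 2 k) (2 * (K - (0 + K))) + 0) in H.
    simpl (0 + K)%nat in H. rewrite Nat.sub_diag in H. change (zp (zp 2 k) (2 * 0)) with 1 in H.
    assert (D : (zp (zp 2 k) 2 | zl (fun j => z j * sig j k * zp (zp 2 k) (2 * (K - j))) (seq 0 K))).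
    { apply zl_div. intros m Hm. apply in_seq in Hm.
      replace (2 * (K - m))%nat with (2 + 2 * (K - m - 1))%nat by lia. rewrite zp_add.
      exists (z m * sig m k * zp (zp 2 k) (2 * (K - m - 1))). ring. }
    assert (D2 : (zp (zp 2 k) 2 | z K * sig K k)).
    { apply Z.divide_opp_r. replace (- (z K * sig K k)) with (zl (fun j => z j * sig j k * zp (zp 2 k) (2 * (K - j))) (seq 0 K)) by lia. exact D. }
    destruct (val K k HK Hk) as [t [Ht Hs]].
    rewrite <- zp_mul in D2. replace (k * 2)%nat with ((k - 1) + S k)%nat in D2 by lia.
    rewrite zp_add, Hs in D2. destruct D2 as [w Hw].
    assert (Hw' : z K * t = w * zp 2 (S k)).
    { apply Z.mul_reg_l with (zp 2 (k - 1)). pose proof (zp_pos 2 (k-1)); lia.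
      transitivity (z K * (zp 2 (k - 1) * t)). ring. rewrite Hw. ring. }
    apply Z.gauss with t. rewrite Z.mul_comm, Hw'. apply Z.divide_factor_r.
    apply Zgcd_1_rel_prime. apply rel_prime_sym. apply relp_odd; auto. }
  set (k := S (Z.to_nat (Z.abs (z K)))).
  specialize (Hd k ltac:(unfold k; lia)).
  destruct (Z.eq_dec (z K) 0) as [E|E]; auto. exfalso.
  apply Z.divide_abs_r in Hd. apply Z.divide_pos_le in Hd; [|lia].
  pose proof (zp_gt (S k)). unfold k in *. rewrite !Nat2Z.inj_succ, Z2Nat.id in * by lia. lia.
Qed.

Lemma Ssum_sig j k : Ssum (2 * j) (2 ^ k) = IZR (sig j k).
Proof.
  unfold Ssum, sig. rewrite IZR_zl. f_equal. apply map_ext. intros m.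
  rewrite IZR_zp, INR_IZR_INZ. reflexivity.
Qed.

Lemma core K : forall z : nat -> Z,
  (forall k, (1 <= k)%nat -> lsum (fun j => (IZR (z j) * A (2 * j)%nat (2 ^ k)%nat)%R) 0 (S K) = 0%R) ->
  forall j, (j <= K)%nat -> z j = 0.
Proof.
  induction K as [|K IH]; intros z H j Hj.
  - specialize (H 1%nat (le_n 1)). unfold lsum in H. simpl in H. unfold A, Ssum in H. simpl in H.
    replace j with 0%nat by lia. apply eq_IZR. lra.
  - assert (Htop : z (S K) = 0).
    { apply topzero; [lia|]. intros k Hk. apply eq_IZR. rewrite IZR_zl.
      fold (lsum (fun j => IZR (z j * sig j k * zp (zp 2 k) (2 * (S K - j)))) 0 (S (S K))).
      set (P := IZR (zp 2 k)).
      assert (HP : P <> 0%R) by (unfold P; apply not_0_IZR; pose proof (zp_pos 2 k); lia).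
      transitivity (P ^ (2 * S K) * lsum (fun j => (IZR (z j) * A (2 * j)%nat (2 ^ k)%nat)%R) 0 (S (S K)))%R.
      2: { rewrite (H k Hk). ring. }
      rewrite <- lsum_scal. apply lsum_ext_in. intros m Hm.
      unfold A. rewrite Ssum_sig. rewrite INR_IZR_INZ, zp_nat2. fold P.
      rewrite !mult_IZR, IZR_zp. fold P.
      replace (2 * S K)%nat with (2 * m + 2 * (S K - m))%nat by lia. rewrite pow_add.
      field. apply pow_nonzero. auto. }
    destruct (Nat.eq_dec j (S K)) as [->|Hne]; auto.
    apply IH; [|lia]. intros k Hk. specialize (H k Hk). rewrite lsum_Sr in H. simpl (0 + S K)%nat in H. rewrite Htop, Rmult_0_l, Rplus_0_r in H. exact H.
Qed.

Lemma prod_div (l : list Z) x : In x l -> (x | fold_right Z.mul 1 l).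
Proof.
  induction l; simpl; [tauto|]. intros [->|H].
  - apply Z.divide_factor_l.
  - apply Z.divide_mul_r. auto.
Qed.
Lemma prod_pos (l : list nat) (f : nat -> positive) : 0 < fold_right Z.mul 1 (map (fun j => Z.pos (f j)) l).
Proof. induction l; cbn [fold_right map]; [lia|]. apply Z.mul_pos_pos; [lia|auto]. Qed.

Lemma coreQ K (q : nat -> Q) :
  (forall k, (1 <= k)%nat -> lsum (fun j => (Q2R (q j) * A (2 * j)%nat (2 ^ k)%nat)%R) 0 (S K) = 0%R) ->
  forall j, (j <= K)%nat -> (q j == 0)%Q.
Proof.
  intros H.
  set (Dp := fold_right Z.mul 1 (map (fun j => Z.pos (Qden (q j))) (seq 0 (S K)))).
  assert (HD : 0 < Dp) by apply prod_pos.
  set (z := fun j => Qnum (q j) * (Dp / Z.pos (Qden (q j)))).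
  assert (Hz : forall j, (j <= K)%nat -> IZR (z j) = (Q2R (q j) * IZR Dp)%R).
  { intros j Hj. assert (Hdv : (Z.pos (Qden (q j)) | Dp)).
    { apply prod_div. apply (in_map (fun j => Z.pos (Qden (q j))) (seq 0 (S K)) j). apply in_seq. lia. }
    destruct Hdv as [c Hc]. unfold z. rewrite Hc, Z.div_mul by lia.
    unfold Q2R. rewrite !mult_IZR. field. apply not_0_IZR. lia. }
  assert (Hc := core K z).
  intros j Hj. apply eqR_Qeq. rewrite RMicromega.Q2R_0.
  assert (z j = 0).
  { apply Hc; auto. intros k Hk. rewrite (lsum_ext_in _ (fun j => (IZR Dp * (Q2R (q j) * A (2 * j)%nat (2 ^ k)%nat))%R)).
    rewrite lsum_scal, H; auto. ring.
    intros m Hm. rewrite Hz by lia. ring. }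
  pose proof (Hz j Hj). rewrite H0 in H1. simpl in H1.
  assert (IZR Dp <> 0%R) by (apply not_0_IZR; lia).
  symmetry in H1. apply Rmult_integral in H1 as [E|E]; auto. contradiction.
Qed.

End TwoAdic.
Import TwoAdic.

Lemma Series_zero (a : nat -> R) : (forall n, a n = 0) -> Series a = 0.
Proof.
  intros H. rewrite (Series_ext _ (fun n => 0 * 0)) by (intros; rewrite H; ring).
  rewrite Series_scal_l. ring.
Qed.

Lemma E_mul_n p n : (1 <= n)%nat -> E p n * INR n = E (p - 1) n.
Proof.
  intros Hn. unfold E. rewrite <- (exp_ln (INR n)) at 2 by (apply lt_0_INR; lia).
  rewrite <- exp_plus. f_equal. ring.
Qed.

Lemma exH (s : R) (h g : nat -> R) (M : R) : 2 < s ->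
  (forall n, Rabs (h n) <= E s n) -> (forall n, Rabs (g n) <= M * INR n) ->
  ex_series (fun n => Rabs (h n * g n)).
Proof.
  intros Hs Hh Hg.
  assert (HM : 0 <= M). { specialize (Hg 1%nat). simpl in Hg. pose proof (Rabs_pos (g 1%nat)). lra. }
  apply (@ex_series_le R_AbsRing R_CompleteNormedModule _ (fun n => M * E (s - 1) n)).
  - intros n. change (norm (Rabs (h n * g n))) with (Rabs (Rabs (h n * g n))). rewrite Rabs_Rabsolu, Rabs_mult.
    destruct n as [|n].
    + specialize (Hg 0%nat). simpl in Hg. rewrite Rmult_0_r in Hg.
      assert (Rabs (g 0%nat) = 0) by (pose proof (Rabs_pos (g 0%nat)); lra). rewrite H, Rmult_0_r.
      pose proof (E_pos (s-1) 0). nra.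
    + rewrite <- E_mul_n by lia.
      specialize (Hh (S n)). specialize (Hg (S n)). pose proof (Rabs_pos (h (S n))). pose proof (Rabs_pos (g (S n))).
      assert (0 <= INR (S n)) by apply pos_INR. pose proof (E_pos s (S n)).
      apply Rle_trans with (E s (S n) * (M * INR (S n))). apply Rmult_le_compat; auto. nra.
  - apply (ex_series_scal_l M (E (s - 1))). apply pseries. lra.
Qed.

Definition X (s : C) (n : nat) : R := exp (- Re s * ln (INR n)) * cos (Im s * ln (INR n)).
Definition Y (s : C) (n : nat) : R := - (exp (- Re s * ln (INR n)) * sin (Im s * ln (INR n))).

Lemma X_bound s n : Rabs (X s n) <= E (Re s) n.
Proof.
  unfold X, E. rewrite Rabs_mult, Rabs_pos_eq by (left; apply exp_pos).
  pose proof (exp_pos (- Re s * ln (INR n))). pose proof (COS_bound (Im s * ln (INR n))).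
  assert (Rabs (cos (Im s * ln (INR n))) <= 1) by (apply Rabs_le; lra). nra.
Qed.
Lemma Y_bound s n : Rabs (Y s n) <= E (Re s) n.
Proof.
  unfold Y, E. rewrite Rabs_Ropp, Rabs_mult, Rabs_pos_eq by (left; apply exp_pos).
  pose proof (exp_pos (- Re s * ln (INR n))). pose proof (SIN_bound (Im s * ln (INR n))).
  assert (Rabs (sin (Im s * ln (INR n))) <= 1) by (apply Rabs_le; lra). nra.
Qed.

Lemma expc n c : (1 <= n)%nat -> exp (- INR c * ln (INR n)) = / INR n ^ c.
Proof.
  intros Hn. rewrite <- Rpower_pow by (apply lt_0_INR; lia). unfold Rpower.
  rewrite <- exp_Ropp. f_equal. ring.
Qed.

Lemma dz_re c s n : Re (dz_term c s n) = X s n * A c n.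
Proof.
  unfold dz_term, npow_neg, X, A. fold (Ssum c n). unfold Cmult, RtoC, Cplus, Re, Im. cbn [fst snd].
  destruct n as [|n].
  - unfold Ssum. cbn [seq map fold_right Nat.sub]. unfold Rdiv. ring.
  - replace (- (fst s + INR c) * ln (INR (S n))) with (- fst s * ln (INR (S n)) + - INR c * ln (INR (S n))) by ring.
    rewrite exp_plus, expc by lia. rewrite Rplus_0_r. unfold Rdiv. ring.
Qed.
Lemma dz_im c s n : Im (dz_term c s n) = Y s n * A c n.
Proof.
  unfold dz_term, npow_neg, Y, A. fold (Ssum c n). unfold Cmult, RtoC, Cplus, Re, Im. cbn [fst snd].
  destruct n as [|n].
  - unfold Ssum. cbn [seq map fold_right Nat.sub]. unfold Rdiv. ring.
  - replace (- (fst s + INR c) * ln (INR (S n))) with (- fst s * ln (INR (S n)) + - INR c * ln (INR (S n))) by ring.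
    rewrite exp_plus, expc by lia. rewrite Rplus_0_r. unfold Rdiv. ring.
Qed.

Definition Acomb (P : nat -> bool) (q : nat -> Q) (N n : nat) : R :=
  sum_f_R0 (fun c => if P c then Q2R (q c) * A c n else 0) N.

Lemma Acomb_bound P q N n : Rabs (Acomb P q N n) <= sum_f_R0 (fun c => Rabs (Q2R (q c))) N * INR n.
Proof.
  unfold Acomb. induction N.
  - simpl. destruct (P 0%nat).
    + rewrite Rabs_mult. pose proof (A_bound 0 n). rewrite (Rabs_pos_eq (A 0 n)) by lra.
      apply Rmult_le_compat_l; [apply Rabs_pos| lra].
    + rewrite Rabs_R0. apply Rmult_le_pos; [apply Rabs_pos|apply pos_INR].
  - simpl. eapply Rle_trans; [apply Rabs_triang|]. rewrite Rmult_plus_distr_r. apply Rplus_le_compat; auto.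
    destruct (P (S N)).
    + rewrite Rabs_mult. pose proof (A_bound (S N) n). rewrite (Rabs_pos_eq (A (S N) n)) by lra.
      apply Rmult_le_compat_l; [apply Rabs_pos| lra].
    + rewrite Rabs_R0. apply Rmult_le_pos; [apply Rabs_pos|apply pos_INR].
Qed.

Lemma A_bound' c n : Rabs (A c n) <= 1 * INR n.
Proof. pose proof (A_bound c n). rewrite Rabs_pos_eq by lra. lra. Qed.

Lemma Re_csum f N : Re (csum f N) = sum_f_R0 (fun c => Re (f c)) N.
Proof. induction N; simpl; auto. rewrite <- IHN. reflexivity. Qed.
Lemma Im_csum f N : Im (csum f N) = sum_f_R0 (fun c => Im (f c)) N.
Proof. induction N; simpl; auto. rewrite <- IHN. reflexivity. Qed.

Lemma series_lin (Z : nat -> R) (P : nat -> bool) (q : nat -> Q) N s :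
  2 < s -> (forall n, Rabs (Z n) <= E s n) ->
  sum_f_R0 (fun c => if P c then Q2R (q c) * Series (fun n => Z n * A c n) else 0) N
  = Series (fun n => Z n * Acomb P q N n).
Proof.
  intros Hs HZ.
  assert (exA : forall c, ex_series (fun n => Z n * A c n)).
  { intros c. apply ex_series_Rabs. apply (exH s _ _ 1); auto. intros; apply A_bound'. }
  assert (exC : forall N, ex_series (fun n => Z n * Acomb P q N n)).
  { intros N'. apply ex_series_Rabs. apply (exH s _ _ _ Hs HZ (Acomb_bound P q N')). }
  induction N.
  - simpl. unfold Acomb. simpl. destruct (P 0%nat).
    + rewrite <- Series_scal_l. apply Series_ext. intros; ring.
    + symmetry. apply Series_zero. intros; ring.
  - simpl sum_f_R0 at 1. rewrite IHN.
    rewrite (Series_ext (fun n => Z n * Acomb P q (S N) n) (fun n => Z n * Acomb P q N n + Z n * (if P (S N) then Q2R (q (S N)) * A (S N) n else 0))).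
    2: { intros n. unfold Acomb. rewrite tech5. ring. }
    rewrite Series_plus; auto.
    + f_equal. destruct (P (S N)).
      * rewrite <- Series_scal_l. apply Series_ext. intros; ring.
      * symmetry. apply Series_zero. intros; ring.
    + destruct (P (S N)).
      * apply ex_series_Rabs. apply (exH s _ _ (Rabs (Q2R (q (S N)))) Hs HZ). intros n.
        rewrite Rabs_mult. pose proof (A_bound (S N) n). rewrite (Rabs_pos_eq (A (S N) n)) by lra.
        apply Rmult_le_compat_l; [apply Rabs_pos| lra].
      * apply ex_series_Rabs. apply (exH s _ _ 0 Hs HZ). intros n. rewrite Rabs_R0. lra.
Qed.

Lemma Re_scal r (z : C) : Re (Cmult (RtoC r) z) = r * Re z.
Proof. destruct z. unfold Cmult, RtoC, Re, Im. cbn [fst snd]. ring. Qed.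
Lemma Im_scal r (z : C) : Im (Cmult (RtoC r) z) = r * Im z.
Proof. destruct z. unfold Cmult, RtoC, Re, Im. cbn [fst snd]. ring. Qed.

Lemma zcomb_re P q N s : Hdom s -> Re (zcomb P q N s) = Series (fun n => X s n * Acomb P q N n).
Proof.
  intros Hs. unfold zcomb. rewrite Re_csum. rewrite <- (series_lin (X s) P q N (Re s)); auto.
  2: apply X_bound.
  apply sum_eq. intros c _. destruct (P c).
  - rewrite Re_scal. unfold dzeta at 1, Re at 1. cbn [fst]. f_equal. apply Series_ext. intros n.
    apply dz_re.
  - reflexivity.
Qed.
Lemma zcomb_im P q N s : Hdom s -> Im (zcomb P q N s) = Series (fun n => Y s n * Acomb P q N n).
Proof.
  intros Hs. unfold zcomb. rewrite Im_csum. rewrite <- (series_lin (Y s) P q N (Re s)); auto.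
  2: apply Y_bound.
  apply sum_eq. intros c _. destruct (P c).
  - rewrite Im_scal. unfold dzeta at 1, Im at 1. cbn [snd]. f_equal. apply Series_ext. intros n.
    apply dz_im.
  - reflexivity.
Qed.

Lemma zcomb_eq P1 q1 N1 P2 q2 N2 s : Hdom s ->
  (forall n, Acomb P1 q1 N1 n = Acomb P2 q2 N2 n) -> zcomb P1 q1 N1 s = zcomb P2 q2 N2 s.
Proof.
  intros Hs H. apply injective_projections.
  - change (Re (zcomb P1 q1 N1 s) = Re (zcomb P2 q2 N2 s)). rewrite !zcomb_re by auto.
    apply Series_ext. intros; rewrite H; reflexivity.
  - change (Im (zcomb P1 q1 N1 s) = Im (zcomb P2 q2 N2 s)). rewrite !zcomb_im by auto.
    apply Series_ext. intros; rewrite H; reflexivity.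
Qed.

Lemma exp_le x y : x <= y -> exp x <= exp y.
Proof. intros [H|H]. left; apply exp_increasing; auto. subst; lra. Qed.

Lemma exp_pow d N : exp (INR N * d) = exp d ^ N.
Proof.
  induction N. simpl. rewrite Rmult_0_l. apply exp_0.
  rewrite S_INR, Rmult_plus_distr_r, Rmult_1_l, exp_plus, IHN. simpl. ring.
Qed.

Lemma dir_uniq (a : nat -> R) (M : R) :
  (forall n, Rabs (a n) <= M * INR n) ->
  (forall s, 2 < s -> Series (fun n => E s n * a n) = 0) ->
  forall n, a n = 0.
Proof.
  intros Hb HS.
  assert (Ha0 : a 0%nat = 0).
  { specialize (Hb 0%nat). simpl in Hb. rewrite Rmult_0_r in Hb. pose proof (Rabs_pos (a 0%nat)).
    apply Rabs_eq_0. lra. }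
  assert (HEabs : forall s n, Rabs (E s n) <= E s n).
  { intros. rewrite Rabs_pos_eq. lra. left; apply E_pos. }
  intros k. induction k as [k IH] using (well_founded_induction lt_wf).
  destruct k as [|k']; auto. set (k := S k').
  assert (Hk0 : 0 < INR k) by (apply lt_0_INR; unfold k; lia).
  set (d := ln (INR k) - ln (INR (S k))).
  assert (Hd : d < 0).
  { unfold d. assert (ln (INR k) < ln (INR (S k))). apply ln_increasing; auto. apply lt_INR; lia. lra. }
  set (r := exp d).
  assert (Hr : 0 < r < 1). { split. apply exp_pos. unfold r. rewrite <- exp_0. apply exp_increasing. auto. }
  set (b := fun j => E 3 (k + S j) * Rabs (a (k + S j)%nat)).
  assert (Hexb : ex_series b).
  { assert (H := exH 3 (E 3) a M ltac:(lra) (HEabs 3) Hb).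
    apply (proj1 (ex_series_incr_n _ (S k))) in H.
    apply (ex_series_ext (fun j => Rabs (E 3 (S k + j) * a (S k + j)%nat))); auto.
    intros j. unfold b. rewrite Rabs_mult, Rabs_pos_eq by (left; apply E_pos). replace (S k + j)%nat with (k + S j)%nat by lia. reflexivity. }
  set (C := exp (3 * ln (INR k)) * Series b).
  assert (Key : forall N, Rabs (a k) <= r ^ N * C).
  { intros N. set (s := 3 + INR N).
    assert (Hs : 2 < s) by (unfold s; pose proof (pos_INR N); lra).
    set (u := fun n => E s n * a n).
    assert (Hexu : ex_series (fun n => Rabs (u n))) by (apply (exH s (E s) a M Hs (HEabs s) Hb)).
    assert (H0 := HS s Hs). fold u in H0.
    rewrite (Series_incr_n_aux u k) in H0.
    2: { intros m Hm. unfold u. rewrite (IH m); [ring|]. unfold k in *; lia. }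
    assert (Hexk : ex_series (fun j => u (k + j)%nat)).
    { apply ex_series_Rabs. apply (ex_series_incr_n (fun n => Rabs (u n)) k). auto. }
    rewrite Series_incr_1 in H0 by auto. rewrite Nat.add_0_r in H0.
    assert (Hexk1 : ex_series (fun j => Rabs (u (k + S j)%nat))).
    { apply (proj1 (ex_series_incr_n _ (S k))) in Hexu.
      apply (ex_series_ext (fun j => Rabs (u (S k + j)%nat))); auto. intros j. f_equal. f_equal. lia. }
    assert (H1 : Rabs (u k) <= Series (fun j => Rabs (u (k + S j)%nat))).
    { replace (u k) with (- Series (fun j => u (k + S j)%nat)) by lra. rewrite Rabs_Ropp. apply Series_Rabs. auto. }
    assert (Hinv : exp (s * ln (INR k)) * E s k = 1).
    { unfold E. rewrite <- exp_plus. replace (s * ln (INR k) + - s * ln (INR k)) with 0 by ring. apply exp_0. }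
    assert (H2 : Rabs (a k) = exp (s * ln (INR k)) * Rabs (u k)).
    { unfold u. rewrite Rabs_mult, (Rabs_pos_eq (E s k)) by (left; apply E_pos). rewrite <- Rmult_assoc, Hinv. ring. }
    rewrite H2.
    apply Rle_trans with (exp (s * ln (INR k)) * Series (fun j => Rabs (u (k + S j)%nat))).
    { apply Rmult_le_compat_l; auto. left; apply exp_pos. }
    rewrite <- Series_scal_l. unfold C. rewrite <- Rmult_assoc, <- Series_scal_l.
    apply Series_le.
    - intros j. split. apply Rmult_le_pos. left; apply exp_pos. apply Rabs_pos.
      unfold u, b. rewrite Rabs_mult, (Rabs_pos_eq (E s _)) by (left; apply E_pos).
      set (m := (k + S j)%nat).
      assert (Hm : INR (S k) <= INR m) by (apply le_INR; unfold m; lia).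
      assert (Hlm : ln (INR (S k)) <= ln (INR m)) by (apply ln_le; auto; apply lt_0_INR; lia).
      assert (Heq : exp (s * ln (INR k)) * E s m = exp (3 * ln (INR k)) * E 3 m * exp (INR N * (ln (INR k) - ln (INR m)))).
      { unfold E, s. rewrite <- !exp_plus. f_equal. ring. }
      assert (Hle : exp (INR N * (ln (INR k) - ln (INR m))) <= r ^ N).
      { unfold r. rewrite <- exp_pow. apply exp_le. unfold d. pose proof (pos_INR N). nra. }
      rewrite <- Rmult_assoc, Heq.
      pose proof (Rabs_pos (a m)). pose proof (exp_pos (3 * ln (INR k))). pose proof (E_pos 3 m).
      pose proof (exp_pos (INR N * (ln (INR k) - ln (INR m)))).
      assert (0 <= exp (3 * ln (INR k)) * E 3 m * Rabs (a m)) by (apply Rmult_le_pos; [apply Rmult_le_pos|]; lra).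
      replace (r ^ N * exp (3 * ln (INR k)) * (E 3 m * Rabs (a m))) with (r ^ N * (exp (3 * ln (INR k)) * E 3 m * Rabs (a m))) by ring.
      replace (exp (3 * ln (INR k)) * E 3 m * exp (INR N * (ln (INR k) - ln (INR m))) * Rabs (a m)) with
        (exp (INR N * (ln (INR k) - ln (INR m))) * (exp (3 * ln (INR k)) * E 3 m * Rabs (a m))) by ring.
      apply Rmult_le_compat_r; auto.
    - apply (ex_series_scal_l (r ^ N * exp (3 * ln (INR k))) b). auto. }
  assert (HC : 0 <= C). { specialize (Key 0%nat). simpl in Key. pose proof (Rabs_pos (a k)). lra. }
  destruct (Req_dec (a k) 0) as [E0|Ene]; auto. exfalso.
  assert (He : 0 < Rabs (a k)) by (apply Rabs_pos_lt; auto).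
  destruct (pow_lt_1_zero r ltac:(rewrite Rabs_pos_eq; lra) (Rabs (a k) / (C + 1))) as [N HN].
  { apply Rdiv_lt_0_compat; lra. }
  specialize (HN N (le_n N)). specialize (Key N).
  rewrite Rabs_pos_eq in HN by (apply pow_le; lra).
  assert (r ^ N * C <= Rabs (a k) / (C + 1) * C) by (apply Rmult_le_compat_r; lra).
  assert (Rabs (a k) / (C + 1) * C < Rabs (a k)).
  { unfold Rdiv. apply Rmult_lt_reg_r with (C + 1). lra.
    replace (Rabs (a k) * / (C + 1) * C * (C + 1)) with (Rabs (a k) * C) by (field; lra). nra. }
  lra.
Qed.

Lemma reduce N (q : nat -> Q) : exists q', forall n, Acomb all_c q N n = Acomb Nat.even q' N n.
Proof.
  induction N as [|N IH].
  - exists q. intros n. reflexivity.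
  - destruct IH as [q' Hq'].
    destruct (Nat.even (S N)) eqn:Ev.
    + exists (fun c => if (c =? S N)%nat then q (S N) else q' c). intros n. unfold Acomb. rewrite !tech5.
      fold (Acomb all_c q N n). rewrite Hq'. unfold Acomb. rewrite Ev, Nat.eqb_refl. unfold all_c. f_equal.
      apply sum_eq. intros c Hc. replace (c =? S N)%nat with false by (symmetry; apply Nat.eqb_neq; lia). reflexivity.
    + assert (EvN : Nat.even N = true).
      { rewrite Nat.even_succ in Ev. rewrite <- Nat.negb_odd, Ev. reflexivity. }
      apply Nat.even_spec in EvN. destruct EvN as [K HK].
      destruct (F1 K) as [h Hh].
      exists (fun c => (q' c + q (S N) * h (Nat.div2 c))%Q). intros n. unfold Acomb. rewrite !tech5.
      fold (Acomb all_c q N n). rewrite Hq'. unfold Acomb. rewrite Ev. unfold all_c.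
      rewrite (sum_eq (fun c => if Nat.even c then Q2R (q' c + q (S N) * h (Nat.div2 c)) * A c n else 0) (fun c => (if Nat.even c then Q2R (q' c) * A c n else 0) + Q2R (q (S N)) * (if Nat.even c then Q2R (h (Nat.div2 c)) * A c n else 0))).
      2: { intros c _. destruct (Nat.even c). rewrite Q2R_plus, Q2R_mult. ring. ring. }
      rewrite plus_sum, Rplus_0_r. f_equal.
      rewrite (sum_eq (fun c => Q2R (q (S N)) * (if Nat.even c then Q2R (h (Nat.div2 c)) * A c n else 0)) (fun c => (if Nat.even c then Q2R (h (Nat.div2 c)) * A c n else 0) * Q2R (q (S N)))) by (intros; ring).
      rewrite <- scal_sum. f_equal.
      rewrite evsum. rewrite HK, Nat.div2_double. rewrite Hh. apply lsum_ext. intros j. rewrite Nat.div2_double. reflexivity.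
Qed.

Lemma ZN_iff N f : ZN N f <-> in_span Nat.even N f.
Proof.
  split.
  - intros [q Hq]. destruct (reduce N q) as [q' Hq']. exists q'. intros s Hs. rewrite Hq by auto. apply zcomb_eq; auto.
  - intros [q1 Hq1]. exists (fun c => if Nat.even c then q1 c else 0%Q). intros s Hs. rewrite Hq1 by auto. apply zcomb_eq; auto.
    intros n. unfold Acomb. apply sum_eq. intros c _. unfold all_c. destruct (Nat.even c); auto.
    rewrite RMicromega.Q2R_0. ring.
Qed.

Lemma lin_indep_even N : lin_indep Nat.even N.
Proof.
  intros q H c Hc Hev.
  set (a := Acomb Nat.even q N).
  assert (Ha : forall n, a n = 0).
  { apply (dir_uniq a (sum_f_R0 (fun c => Rabs (Q2R (q c))) N)).
    - intros n. apply Acomb_bound.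
    - intros sg Hsg. assert (Hd : Hdom (sg, 0)) by (unfold Hdom, Re; simpl; lra).
      specialize (H _ Hd). apply (f_equal Re) in H. rewrite zcomb_re in H by auto.
      change (Re (RtoC 0)) with 0 in H. rewrite <- H. apply Series_ext. intros n.
      unfold X, E, Re, Im. simpl fst. simpl snd. rewrite Rmult_0_l, cos_0. unfold a. ring. }
  assert (Hl : forall n, lsum (fun j => Q2R (q (2 * j)%nat) * A (2 * j)%nat n) 0 (S (Nat.div2 N)) = 0).
  { intros n. rewrite <- (evsum (fun c => Q2R (q c) * A c n)). exact (Ha n). }
  apply Nat.even_spec in Hev. destruct Hev as [m Hm].
  assert (Hmn : (m <= Nat.div2 N)%nat) by (pose proof (Nat.div2_odd N); destruct (Nat.odd N); simpl in *; lia).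
  subst c. apply (coreQ (Nat.div2 N) (fun j => q (2 * j)%nat)); auto.
Qed.

Lemma Re_fold (g : nat -> C) l : Re (fold_right Cplus (RtoC 0) (map g l)) = fold_right Rplus 0 (map (fun i => Re (g i)) l).
Proof. induction l; simpl; auto. rewrite <- IHl. reflexivity. Qed.
Lemma Im_fold (g : nat -> C) l : Im (fold_right Cplus (RtoC 0) (map g l)) = fold_right Rplus 0 (map (fun i => Im (g i)) l).
Proof. induction l; simpl; auto. rewrite <- IHl. reflexivity. Qed.

Lemma csum_even (G : nat -> C) N :
  csum (fun c => if Nat.even c then G c else RtoC 0) N = fold_right Cplus (RtoC 0) (map (fun i => G (2 * i)%nat) (seq 0 (S (Nat.div2 N)))).
Proof.
  apply injective_projections.
  - change (Re (csum (fun c => if Nat.even c then G c else RtoC 0) N) = Re (fold_right Cplus (RtoC 0) (map (fun i => G (2 * i)%nat) (seq 0 (S (Nat.div2 N)))))).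
    rewrite Re_csum, Re_fold. fold (lsum (fun i => Re (G (2 * i)%nat)) 0 (S (Nat.div2 N))).
    rewrite <- (evsum (fun c => Re (G c))). apply sum_eq. intros c _. destruct (Nat.even c); reflexivity.
  - change (Im (csum (fun c => if Nat.even c then G c else RtoC 0) N) = Im (fold_right Cplus (RtoC 0) (map (fun i => G (2 * i)%nat) (seq 0 (S (Nat.div2 N)))))).
    rewrite Im_csum, Im_fold. fold (lsum (fun i => Im (G (2 * i)%nat)) 0 (S (Nat.div2 N))).
    rewrite <- (evsum (fun c => Im (G c))). apply sum_eq. intros c _. destruct (Nat.even c); reflexivity.
Qed.

Lemma zcomb_fam q N s : zcomb Nat.even q N s = fam_comb (fun i => dzeta (2 * i)) (fun i => q (2 * i)%nat) (Nat.div2 N + 1) s.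
Proof. unfold zcomb, fam_comb. rewrite csum_even, Nat.add_1_r. reflexivity. Qed.

Lemma dzeta_re c s : Re (dzeta c s) = Series (fun n => X s n * A c n).
Proof. unfold dzeta, Re at 1. cbn [fst]. apply Series_ext. intros; apply dz_re. Qed.
Lemma dzeta_im c s : Im (dzeta c s) = Series (fun n => Y s n * A c n).
Proof. unfold dzeta, Im at 1. cbn [snd]. apply Series_ext. intros; apply dz_im. Qed.

Lemma hasdim N : has_Qdim (ZN N) (Nat.div2 N + 1).
Proof.
  exists (fun i => dzeta (2 * i)). split; [|split].
  - intros i Hi. apply ZN_iff. exists (fun c => if (c =? 2 * i)%nat then 1%Q else 0%Q). intros s Hs.
    assert (HA : forall n, Acomb Nat.even (fun c => if (c =? 2 * i)%nat then 1%Q else 0%Q) N n = A (2 * i) n).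
    { intros n. unfold Acomb. rewrite evsum.
      assert (Hi' : (i < S (Nat.div2 N))%nat) by lia.
      clear Hi. induction (S (Nat.div2 N)) as [|L IHL]; [lia|].
      rewrite lsum_Sr. simpl (0 + L)%nat. destruct (Nat.eq_dec i L) as [->|Hne].
      + rewrite Nat.eqb_refl, RMicromega.Q2R_1.
        rewrite (lsum_ext_in _ (fun _ => 0)). rewrite lsum_zero. ring.
        intros m Hm. replace (2 * m =? 2 * L)%nat with false by (symmetry; apply Nat.eqb_neq; lia).
        rewrite RMicromega.Q2R_0. ring.
      + rewrite IHL by lia. replace (2 * L =? 2 * i)%nat with false by (symmetry; apply Nat.eqb_neq; lia).
        rewrite RMicromega.Q2R_0. ring. }
    apply injective_projections.
    + change (Re (dzeta (2 * i) s) = Re (zcomb Nat.even (fun c => if (c =? 2 * i)%nat then 1%Q else 0%Q) N s)).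
      rewrite dzeta_re, zcomb_re by auto. apply Series_ext. intros n. rewrite HA. reflexivity.
    + change (Im (dzeta (2 * i) s) = Im (zcomb Nat.even (fun c => if (c =? 2 * i)%nat then 1%Q else 0%Q) N s)).
      rewrite dzeta_im, zcomb_im by auto. apply Series_ext. intros n. rewrite HA. reflexivity.
  - intros q Hq i Hi.
    assert (H := lin_indep_even N (fun c => q (Nat.div2 c))).
    assert (Hi2 : q (Nat.div2 (2 * i)) == 0).
    { apply H; [| pose proof (Nat.div2_odd N); destruct (Nat.odd N); simpl in *; lia | apply even_2K]. intros s Hs. rewrite zcomb_fam. rewrite <- (Hq s Hs).
      unfold fam_comb. f_equal. apply map_ext. intros j. rewrite Nat.div2_double. reflexivity. }
    rewrite Nat.div2_double in Hi2. exact Hi2.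
  - intros f Hf. apply ZN_iff in Hf. destruct Hf as [q Hq]. exists (fun i => q (2 * i)%nat).
    intros s Hs. rewrite Hq by auto. apply zcomb_fam.
Qed.

Theorem theorem2p2 :
  (forall N : nat,
      lin_indep Nat.even N /\
      (forall f, ZN N f <-> in_span Nat.even N f) /\
      has_Qdim (ZN N) (Nat.div2 N + 1)) /\
  (forall N : nat, lin_indep Nat.even N) /\
  (forall f, Zall f <-> exists N, in_span Nat.even N f).
Proof.
  split; [|split].
  - intros N. split; [apply lin_indep_even|split; [apply ZN_iff|apply hasdim]].
  - apply lin_indep_even.
  - intros f. split.
    + intros [N HN]. exists N. apply ZN_iff; auto.
    + intros [N HN]. exists N. apply ZN_iff; auto.
Qed.
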